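(* For every $\varepsilon\in[0,N)$, writing $C(0,r)=\{\zeta\in\mathbb C:|\zeta|=r\}$ and $F(\zeta)=\frac1N\mathrm{tr}\Big(\frac{1-\zeta}{N-\zeta(N-2+2Q)}\Big)$, \[ \min_{\zeta\in C(0,1-\varepsilon/N)}|F(\zeta)|=\frac1{N^2}\mathrm{tr}\left(\frac{\varepsilon}{2-2Q+\varepsilon-\frac{\varepsilon}N(2-2Q)}\right),\qquad \max_{\zeta\in C(0,1-\varepsilon/N)}|F(\zeta)|=\frac1{N^2}\mathrm{tr}\left(\frac{2-\frac\varepsilon N}{1+(1-\frac\varepsilon N)(1-\frac2N+\frac{2Q}N)}\right), \] and the minimum and maximum are attained at $\zeta=1-\varepsilon/N$ and $\zeta=-(1-\varepsilon/N)$ respectively. Here, for each eigenvalue $q$ of $Q$, the scalar function $\zeta\mapsto\frac{1-\zeta}{N-\zeta(N-2+2q)}$ is defined at its removable singularity in the natural way (for $q=1$ it equals the constant $1/N$), and when $\varepsilon=0$ the right-hand side of the minimum formula is read as $1/N^2$.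
   Context: $E$ is a finite set with $N=\#E>8$ elements; $Q$ is an irreducible stochastic matrix on $E$ with $Q(x,y)=Q(y,x)$ for all $x,y$ and $\mathrm{tr}(Q)=0$. For a function $f$ defined on the spectrum of $Q$ (which lies in $[-1,1]$), $f(Q)$ is defined by functional calculus, so $\mathrm{tr}(f(Q))=\sum_q f(q)$ over eigenvalues $q$ of $Q$ counted with multiplicity; fractions of the form $\frac{a(Q)}{b(Q)}$ mean $f(Q)$ with $f(q)=a(q)/b(q)$. *)

(* Defs.v *)
From HB Require Import structures.
From mathcomp Require Import all_boot all_order all_algebra.
Set Implicit Arguments. Unset Strict Implicit. Unset Printing Implicit Defensive.
Import Order.TTheory GRing.Theory Num.Theory.
Local Open Scope ring_scope.

(* E is modelled as 'I_N; Q is a matrix with entries in a numeric closed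
   field C (e.g. the complex numbers); nonnegativity 0 <= Q x y forces
   entries to be real. *)

Definition stochastic (C : numClosedFieldType) (N : nat) (Q : 'M[C]_N) : Prop :=
  (forall x y, 0 <= Q x y) /\ (forall x, \sum_y Q x y = 1).

Definition irreducible (C : numClosedFieldType) (N : nat) (Q : 'M[C]_N) : Prop :=
  forall x y, exists n : nat, 0 < (Q ^+ n) x y.

Definition Fscal (C : numClosedFieldType) (N : nat) (q zeta : C) : C :=
  if q == 1 then N%:R^-1
  else (1 - zeta) / (N%:R - zeta * (N%:R - 2 + 2 * q)).

(* F(zeta) = (1/N) tr f(Q) = (1/N) sum over eigenvalues (with multiplicity) *)
Definition Ffun (C : numClosedFieldType) (N : nat) (s : seq C) (zeta : C) : C :=
  N%:R^-1 * \sum_(q <- s) Fscal N q zeta.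

Definition minval (C : numClosedFieldType) (N : nat) (s : seq C) (eps : C) : C :=
  if eps == 0 then (N%:R ^+ 2)^-1
  else (N%:R ^+ 2)^-1 *
       \sum_(q <- s) eps / (2 - 2 * q + eps - eps / N%:R * (2 - 2 * q)).

Definition maxval (C : numClosedFieldType) (N : nat) (s : seq C) (eps : C) : C :=
  (N%:R ^+ 2)^-1 *
  \sum_(q <- s) (2 - eps / N%:R) /
                (1 + (1 - eps / N%:R) * (1 - 2 / N%:R + 2 * q / N%:R)).

(* Main.v *)
Require Import Defs.
From HB Require Import structures.
From mathcomp Require Import all_boot all_order all_algebra.
From mathcomp Require Import ring.
Import Order.TTheory GRing.Theory Num.Theory.
Local Open Scope ring_scope.
Set Implicit Arguments. Unset Strict Implicit.

Definition Gs (C : numClosedFieldType) (N : nat) (q z : C) : C :=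
  if q == 1 then 0
  else (2 - 2 * q) * z / (N%:R * (N%:R - z * (N%:R - 2 + 2 * q))).

Section Scal.
Set Default Proof Using "All".
Variable C : numClosedFieldType.
Variable N : nat.
Hypothesis hN : (8 < N)%N.
Local Notation n := (N%:R : C).

Lemma n_gt0 : 0 < n.
Proof. by rewrite ltr0n; apply: leq_trans hN. Qed.

Lemma n_gt4 : 0 < n - 4.
Proof. by rewrite subr_gt0 ltr_nat; apply: leq_trans hN. Qed.

Variables (q eps : C).
Hypotheses (hqr : q \is Num.real) (hq1 : `|q| <= 1) (he0 : 0 <= eps) (he1 : eps < n).

Local Notation r := (1 - eps / n).
Local Notation a := (n - 2 + 2 * q).

Lemma q_bounds : 0 <= 1 - q /\ 0 <= 1 + q.
Proof.
move: hq1; rewrite real_ler_norml // => /andP[h1 h2].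
split; first by rewrite subr_ge0.
have := h1; rewrite -subr_ge0 opprK addrC. done.
Qed.


Lemma t_ge0 : 0 <= eps / n.
Proof. by rewrite divr_ge0 // ltW // n_gt0. Qed.

Lemma t_lt1 : eps / n < 1.
Proof. by rewrite ltr_pdivrMr ?n_gt0 // mul1r. Qed.

Lemma r_gt0 : 0 < r.
Proof. by rewrite subr_gt0 t_lt1. Qed.

Lemma r_le1 : r <= 1.
Proof. by rewrite -subr_ge0 opprB addrCA subrr addr0 t_ge0. Qed.

Lemma a_gt0 : 0 < a.
Proof.
have -> : a = (n - 4) + 2 * (1 + q) by ring.
by rewrite ltr_wpDr ?n_gt4 // mulr_ge0 // (q_bounds).2.
Qed.

Lemma a_le : n - a = 2 * (1 - q).
Proof. ring. Qed.

Lemma den_r_gt0 : q != 1 -> 0 < n - r * a.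
Proof.
move=> hq.
have -> : n - r * a = n * (eps / n) + 2 * (1 - q) * r by ring.
apply: ltr_wpDl; first by rewrite mulr_ge0 ?(ltW n_gt0) ?t_ge0.
rewrite mulr_gt0 ?r_gt0 // mulr_gt0 // lt0r (q_bounds).1 andbT subr_eq0 eq_sym //.
Qed.

Lemma den_mr_gt0 : 0 < n - - r * a.
Proof.
by rewrite mulNr opprK ltr_wpDr ?n_gt0 // mulr_ge0 // ltW ?r_gt0 ?a_gt0.
Qed.

Lemma F5 : 0 <= n - a * r ^+ 2.
Proof.
have -> : n - a * r ^+ 2 = n * (eps / n) * (1 + r) + 2 * (1 - q) * r ^+ 2 by ring.
have r0 := ltW r_gt0.
apply: addr_ge0; apply: mulr_ge0; rewrite ?mulr_ge0 ?(ltW n_gt0) ?t_ge0 ?(q_bounds).1 ?sqr_ge0 //.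
  by rewrite invr_ge0 ler0n.
by rewrite addr_ge0 ?ler01.
Qed.


Lemma den_z z : q != 1 -> `|z| = r -> n - r * a <= `|n - z * a|.
Proof.
move=> hq hz; have := lerB_dist n (z * a).
by rewrite normrM hz normr_nat (ger0_norm (ltW a_gt0)).
Qed.

Lemma den_z_gt0 z : q != 1 -> `|z| = r -> 0 < `|n - z * a|.
Proof. by move=> hq hz; exact: lt_le_trans (den_r_gt0 hq) (den_z hq hz). Qed.

Lemma Fscal_G z : `|z| = r -> Fscal N q z = n^-1 - Gs N q z.
Proof.
rewrite /Fscal /Gs; case: eqP => hq hz; first by rewrite subr0.
have dz : n - z * a != 0.
  by rewrite -normr_gt0 den_z_gt0 //; apply/eqP.
have n0 : n != 0 by rewrite gt_eqF // n_gt0.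
by field; rewrite dz n0.
Qed.

Lemma G_le z : `|z| = r -> `|Gs N q z| <= Gs N q r.
Proof.
rewrite /Gs; case: eqP => hq hz; first by rewrite normr0.
have hq' : q != 1 by apply/eqP.
have b0 : 0 <= 2 - 2 * q.
  have -> : 2 - 2 * q = 2 * (1 - q) by ring.
  by rewrite mulr_ge0 ?(q_bounds).1.
have r0 := r_gt0.
rewrite normf_div !normrM hz (ger0_norm b0) normr_nat.
apply: ler_wpM2l; first by rewrite mulr_ge0 // ltW.
rewrite lef_pV2 ?posrE ?mulr_gt0 ?n_gt0 ?den_r_gt0 ?den_z_gt0 //.
by apply: ler_wpM2l; [exact: ltW n_gt0 | exact: den_z].
Qed.

Lemma Fscal_mr_ge0 : 0 <= Fscal N q (- r).
Proof.
rewrite /Fscal; case: eqP => hq; first by rewrite invr_ge0 ler0n.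
rewrite divr_ge0 // ?ltW ?den_mr_gt0 //.
by rewrite opprK ltr_wpDl // r_gt0.
Qed.

Lemma Fscal_r_ge0 : 0 <= Fscal N q r.
Proof.
rewrite /Fscal; case: eqP => hq; first by rewrite invr_ge0 ler0n.
apply: divr_ge0; last by apply: ltW; apply: den_r_gt0; apply/eqP.
have -> : 1 - (1 - eps / n) = eps / n by ring.
exact: t_ge0.
Qed.



Lemma Fscal_max z : `|z| = r -> `|Fscal N q z| <= Fscal N q (- r).
Proof.
rewrite /Fscal; case: eqP => hq hz; first by rewrite ger0_norm // invr_ge0 ler0n.
have hq' : q != 1 by apply/eqP.
have D0 := den_mr_gt0.
have D := den_z_gt0 hq' hz.
have r0 := r_gt0.
have r1 : 0 <= 1 - - r by rewrite opprK addr_ge0 // ltW.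
rewrite normf_div ler_pdivrMr // mulrAC ler_pdivlMr //.
rewrite -ler_sqr ?nnegrE ?mulr_ge0 ?normr_ge0 ?(ltW D0) //.
rewrite !exprMn !normCK.
have cr : r^* = r by rewrite conj_Creal // ger0_real // ltW.
have ca : a^* = a.
  apply: conj_Creal; apply: rpredD; first by apply: rpredB; exact: realn.
  by apply: rpredM => //; exact: realn.
rewrite !rmorphB /= rmorph1 rmorphM /= rmorph_nat ca.
set w := z^*.
have hzw : z * w = r ^+ 2 by rewrite -normCK hz.
have key : r * ((1 - - r) ^+ 2 * ((n - z * a) * (n - w * a)) -
                (1 - z) * (1 - w) * (n - - r * a) ^+ 2) =
  (n - a) * (n - a * r ^+ 2) * ((z + r) * (w + r)) +
  (r * a ^+ 2 + r ^+ 2 * a ^+ 2 - r * n ^+ 2 - n * a * r ^+ 2 - n ^+ 2 + a * n)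
    * (z * w - r ^+ 2) by ring.
rewrite -subr_ge0 -(pmulr_rge0 _ r0) key hzw subrr mulr0 addr0.
have -> : (z + r) * (w + r) = `|z + r| ^+ 2 by rewrite normCK rmorphD /= cr.
rewrite mulr_ge0 ?sqr_ge0 // mulr_ge0 ?F5 //.
have -> : n - a = 2 * (1 - q) by ring.
by rewrite mulr_ge0 // (q_bounds).1.
Qed.

End Scal.

Section Sum.
Variable C : numClosedFieldType.
Variable N : nat.
Hypothesis hN : (8 < N)%N.
Local Notation n := (N%:R : C).
Variables (s : seq C) (eps : C).
Hypotheses (hs : forall q, q \in s -> q \is Num.real /\ `|q| <= 1)
  (he0 : 0 <= eps) (he1 : eps < n) (hc : count_mem 1 s = 1%N).
Local Notation r := (1 - eps / n).

Lemma r_pos : 0 < r.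
Proof. by apply: (@r_gt0 C N hN 0) => //; rewrite ?real0 // normr0 ler01. Qed.

Lemma ninv_ge0 : 0 <= n^-1.
Proof. by rewrite invr_ge0 ler0n. Qed.

Lemma Ffun_G z : `|z| = r ->
  Ffun N s z = n^-1 * (\sum_(q <- s) n^-1 - \sum_(q <- s) Gs N q z).
Proof.
move=> hz; rewrite /Ffun -sumrB; congr (_ * _); apply: eq_big_seq => q /hs [h1 h2] /=.
by rewrite (Fscal_G hN h1 h2 he0 he1 hz).
Qed.

Lemma lower z : `|z| = r -> Ffun N s r <= `|Ffun N s z|.
Proof.
move=> hz; have hr : `|r| = r by rewrite ger0_norm // ltW // r_pos.
rewrite (Ffun_G hz) (Ffun_G hr) normrM normfV normr_nat.
apply: ler_wpM2l; first exact: ninv_ge0.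
have A0 : 0 <= \sum_(q <- s) n^-1 by apply: sumr_ge0 => q _; exact: ninv_ge0.
apply: le_trans (lerB_dist _ _).
rewrite (ger0_norm A0); apply: lerB => //.
apply: le_trans (ler_norm_sum _ _ _) _.
rewrite big_seq [X in _ <= X]big_seq; apply: ler_sum => q /hs [h1 h2].
by have := G_le hN h1 h2 he0 he1 hz.
Qed.

Lemma upper z : `|z| = r -> `|Ffun N s z| <= Ffun N s (- r).
Proof.
move=> hz; rewrite /Ffun normrM normfV normr_nat.
apply: ler_wpM2l; first exact: ninv_ge0.
apply: le_trans (ler_norm_sum _ _ _) _.
rewrite big_seq [X in _ <= X]big_seq; apply: ler_sum => q /hs [h1 h2].
by have := Fscal_max hN h1 h2 he0 he1 hz.
Qed.

Lemma Fr_ge0 : 0 <= Ffun N s r.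
Proof.
rewrite /Ffun mulr_ge0 ?ninv_ge0 // big_seq sumr_ge0 // => q /hs [h1 h2].
by have := Fscal_r_ge0 hN h1 h2 he0 he1.
Qed.

Lemma Fmr_ge0 : 0 <= Ffun N s (- r).
Proof.
rewrite /Ffun mulr_ge0 ?ninv_ge0 // big_seq sumr_ge0 // => q /hs [h1 h2].
by have := Fscal_mr_ge0 hN h1 h2 he0 he1.
Qed.

Lemma n0 : n != 0.
Proof. by rewrite gt_eqF // (n_gt0 C hN). Qed.

Lemma Fmr_eq : Ffun N s (- r) = maxval N s eps.
Proof.
rewrite /Ffun /maxval mulr_sumr [RHS]mulr_sumr; apply: eq_big_seq => q /hs [h1 h2] /=.
have hn := n0.
rewrite /Fscal; case: eqP => [->|hq].
  have -> : 1 - 2 / n + 2 * 1 / n = 1 by ring.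
  have -> : 2 - eps / n = 1 + r by ring.
  rewrite mulr1 divff; last by rewrite gt_eqF // addr_gt0 ?ltr01 // r_pos.
  by rewrite mulr1 expr2 invrM // unitfE.
have D0 := den_mr_gt0 hN h1 h2 he0 he1.
have ha := a_gt0 hN h1 h2 he0 he1.
have hn0 := n_gt0 C hN.
field; rewrite hn /= gt_eqF // addr_gt0 ?mulr_gt0 // subr_gt0 //.
Qed.

Lemma Fr_eq : Ffun N s r = minval N s eps.
Proof.
rewrite /minval; case: eqP => [e0|e0].
  rewrite e0 mul0r subr0 /Ffun.
  rewrite (eq_bigr (fun q => if q == 1 then n^-1 else 0)); last first.
    by move=> q _; rewrite /Fscal; case: eqP => // _; rewrite subrr mul0r.
  rewrite -big_mkcond /= big_const_seq.
  have -> : count (fun q => q == 1) s = 1%N by exact: hc.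
  by rewrite /= addr0 expr2 invrM // unitfE n0.
rewrite /Ffun mulr_sumr [RHS]mulr_sumr; apply: eq_big_seq => q /hs [h1 h2].
have hn := n0.
have he : eps != 0 by apply/eqP.
rewrite /Fscal; case: eqP => [->|hq].
  have -> : 2 - 2 * 1 + eps - eps / n * (2 - 2 * 1) = eps by ring.
  by rewrite divff // mulr1 expr2 invrM // unitfE.
have hq' : q != 1 by apply/eqP.
have D0 := den_r_gt0 hN h1 h2 he0 he1 hq'.
have ha := a_gt0 hN h1 h2 he0 he1.
have hn0 := n_gt0 C hN.
have E : (2 - 2 * q + eps) * n - eps * (2 - 2 * q) = n * (n - r * (n - 2 + 2 * q)).
  by field.
by field; rewrite hn /= E mulf_neq0 // gt_eqF.
Qed.

Lemma analytic :
  (forall zeta : C, `|zeta| = r ->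
     minval N s eps <= `|Ffun N s zeta| <= maxval N s eps) /\
  `|Ffun N s r| = minval N s eps /\
  `|Ffun N s (- r)| = maxval N s eps.
Proof.
split; first by move=> z hz; rewrite -Fr_eq -Fmr_eq lower ?upper.
by rewrite !ger0_norm ?Fr_ge0 ?Fmr_ge0 ?Fr_eq ?Fmr_eq.
Qed.

End Sum.
Lemma char_poly_conj (R : fieldType) n (P D : 'M[R]_n) : P \in unitmx ->
  char_poly (invmx P *m D *m P) = char_poly D.
Proof.
move=> Pu; rewrite /char_poly /char_poly_mx.
have e : 'X%:M - map_mx polyC (invmx P *m D *m P) =
  map_mx polyC (invmx P) *m ('X%:M - map_mx polyC D) *m map_mx polyC P.
  rewrite mulmxBr mulmxBl !map_mxM; congr (_ - _).
  rewrite -mulmxA mul_scalar_mx -scalemxAr -map_mxM mulVmx //.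
  by rewrite map_mx1 scalemx1.
rewrite e !det_mulmx !det_map_mx mulrC mulrA -rmorphM -det_mulmx mulmxV //.
by rewrite det1 rmorph1 mul1r.
Qed.

Section Spec.
Variable C : numClosedFieldType.
Variable N : nat.
Variable Q : 'M[C]_N.
Hypotheses (hst : stochastic Q) (hirr : irreducible Q) (hsym : Q^T = Q).

Lemma Qsym k j : Q k j = Q j k.
Proof. by rewrite -{1}hsym mxE. Qed.

Lemma colsum j : \sum_k Q k j = 1.
Proof. by rewrite -(hst.2 j); apply: eq_bigr => k _; rewrite Qsym. Qed.

Lemma Qreal : Q \is a mxOver Num.real.
Proof. by apply/mxOverP => i j; apply: ger0_real; exact: hst.1. Qed.

Lemma Qsymmx : Q \is symmetricmx.
Proof. by rewrite qualifE /= expr0 scale1r map_mx_id // hsym. Qed.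


Lemma fix_const (v : 'rV[C]_N) : v *m Q = v ->
  forall k j, Q k j != 0 -> v 0 k = v 0 j.
Proof.
move=> hv.
have vE j : \sum_k v 0 k * Q k j = v 0 j.
  by have := congr1 (fun M : 'rV[C]_N => M 0 j) hv; rewrite mxE.
pose x k := v 0 k.
have T1 : \sum_k \sum_j Q k j * (x k * (x k)^*) = \sum_k x k * (x k)^*.
  by apply: eq_bigr => k _; rewrite -mulr_suml hst.2 mul1r.
have T2 : \sum_k \sum_j Q k j * (x k * (x j)^*) = \sum_j x j * (x j)^*.
  rewrite exchange_big; apply: eq_bigr => j _.
  rewrite -[RHS](congr1 (fun y => y * (x j)^*) (vE j)) mulr_suml.
  by apply: eq_bigr => k _; rewrite /x; ring.
have T3 : \sum_k \sum_j Q k j * (x j * (x k)^*) = \sum_k x k * (x k)^*.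
  apply: eq_bigr => k _.
  rewrite -[RHS](congr1 (fun y => y * (x k)^*) (vE k)) mulr_suml.
  by apply: eq_bigr => j _; rewrite /x Qsym; ring.
have T4 : \sum_k \sum_j Q k j * (x j * (x j)^*) = \sum_j x j * (x j)^*.
  by rewrite exchange_big; apply: eq_bigr => j _; rewrite -mulr_suml colsum mul1r.
have S0 : \sum_k \sum_j Q k j * `|x k - x j| ^+ 2 = 0.
  have e k j : Q k j * `|x k - x j| ^+ 2 =
    Q k j * (x k * (x k)^*) - Q k j * (x k * (x j)^*) -
    Q k j * (x j * (x k)^*) + Q k j * (x j * (x j)^*).
    by rewrite normCK rmorphB /=; ring.
  under eq_bigr do under eq_bigr do rewrite e.
  under eq_bigr do rewrite big_split /= !sumrB.
  rewrite big_split /= !sumrB T1 T2 T3 T4.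
  by rewrite subrr sub0r addNr.
have ge0 k j : 0 <= Q k j * `|x k - x j| ^+ 2.
  by rewrite mulr_ge0 ?exprn_ge0 ?normr_ge0 //; case: hst.
move=> k j hkj.
have h1 : \sum_j Q k j * `|x k - x j| ^+ 2 = 0.
  by apply: (psumr_eq0P _ S0) => // i _; apply: sumr_ge0 => j' _; exact: ge0.
have h2 : Q k j * `|x k - x j| ^+ 2 = 0.
  by apply: (psumr_eq0P _ h1) => // i _; exact: ge0.
move/eqP: h2; rewrite mulf_eq0 (negbTE hkj) /= expf_eq0 /= normr_eq0 subr_eq0.
by move/eqP.
Qed.


Lemma fix_const_all (v : 'rV[C]_N) : v *m Q = v -> forall k j, v 0 k = v 0 j.
Proof.
move=> hv.
have step m : forall k j, (Q ^+ m) k j != 0 -> v 0 k = v 0 j.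
  elim: m => [|m IH] k j.
    rewrite expr0 mxE; have [->|_] := eqVneq k j; first by [].
    by rewrite /= eqxx.
  rewrite exprS -mulmxE mxE => hne.
  case: (boolP [exists l, Q k l * (Q ^+ m) l j != 0]) => [/existsP [l hl] | /existsPn h].
    move: hl; rewrite mulf_eq0 negb_or => /andP [h1 h2].
    by rewrite (fix_const hv h1) (IH _ _ h2).
  move: hne; rewrite big1 ?eqxx // => l _.
  by apply/eqP; move: (h l); rewrite negbK.
move=> k j; have [m hm] := hirr k j; apply: (step m).
by rewrite gt_eqF.
Qed.


Lemma eig_bound (v : 'rV[C]_N) a : v != 0 -> v *m Q = a *: v -> `|a| <= 1.
Proof.
move=> v0 hv.
pose S := \sum_j `|v 0 j|.
have S0 : 0 < S.
  rewrite lt0r sumr_ge0 // andbT; apply: contra v0 => /eqP hS.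
  apply/eqP/rowP => j; rewrite mxE; apply/eqP; rewrite -normr_eq0; apply/eqP.
  by apply: (psumr_eq0P _ hS) => // i _.
have e j : `|a| * `|v 0 j| = `|\sum_k v 0 k * Q k j|.
  have := congr1 (fun M : 'rV[C]_N => M 0 j) hv; rewrite !mxE => ->.
  by rewrite normrM.
have hsum : \sum_k \sum_j `|v 0 k| * Q k j = S.
  by apply: eq_bigr => k _; rewrite -mulr_sumr hst.2 mulr1.
have : `|a| * S <= 1 * S.
  rewrite mul1r {1}/S mulr_sumr (eq_bigr _ (fun j _ => e j)).
  apply: le_trans (_ : \sum_j \sum_k `|v 0 k| * Q k j <= _).
    apply: ler_sum => j _; apply: le_trans (ler_norm_sum _ _ _) _.
    apply: ler_sum => k _; rewrite normrM (ger0_norm (hst.1 k j)) //.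
  by rewrite exchange_big hsum.
by rewrite ler_pM2r.
Qed.


Lemma spec_facts (s : seq C) : (0 < N)%N ->
  char_poly Q = \prod_(q <- s) ('X - q%:P) ->
  (forall q, q \in s -> q \is Num.real /\ `|q| <= 1) /\ count_mem 1 s = 1%N.
Proof.
move=> hN hcp.
have herm := realsym_hermsym Qsymmx Qreal.
have /orthomx_spectralP QE := hermitian_normalmx herm.
have dreal := hermitian_spectral_diag_real herm.
have /unitarymxP PU := spectral_unitarymx Q.
have Punit := spectral_unit Q.
move: QE dreal PU Punit.
set P := spectralmx Q; set d := spectral_diag Q => QE dreal PU Punit.
have hcp2 : char_poly Q = \prod_(i < N) ('X - (d 0 i)%:P).
  rewrite QE char_poly_conj // char_poly_trig ?diag_mx_is_trig //.
  by apply: eq_bigr => i _; rewrite mxE eqxx mulr1n.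
have hperm : perm_eq s (map (d 0) (index_enum 'I_N)).
  by apply: prod_XsubC_eq; rewrite -hcp hcp2 big_map.
have eig i : row i P *m Q = d 0 i *: row i P.
  have PQ : P *m Q = diag_mx d *m P.
    by rewrite {1}QE !mulmxA mulmxV // mul1mx.
  by rewrite -row_mul PQ row_mul row_diag_mx -scalemxAl -rowE.
have PE i k : (P *m (P ^t*)%sesqui) i k = \sum_j P i j * (P k j)^*.
  by rewrite !mxE; apply: eq_bigr => j _; rewrite !mxE.
have rownorm i : \sum_j P i j * (P i j)^* = 1.
  by rewrite -PE PU mxE eqxx.
have rowdot i k : i != k -> \sum_j P i j * (P k j)^* = 0.
  by move=> hik; rewrite -PE PU mxE (negbTE hik).
have row_neq0 i : row i P != 0.
  apply/eqP => h0; have := rownorm i; rewrite big1 => [/eqP|j _].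
    by rewrite eq_sym oner_eq0.
  by have := congr1 (fun M : 'rV[C]_N => M 0 j) h0; rewrite !mxE => ->; rewrite mul0r.
split.
  move=> q; rewrite (perm_mem hperm) => /mapP [i _ ->]; split.
    exact: (mxOverP dreal 0 i).
  exact: eig_bound (row_neq0 i) (eig i).
have one_in : 1 \in s.
  have : root (char_poly Q) 1.
    rewrite -eigenvalue_root_char; apply/eigenvalueP; exists (const_mx 1).
      apply/rowP => j; rewrite !mxE (eq_bigr (fun k => Q k j)) ?colsum ?mulr1 //.
      by move=> k _; rewrite mxE mul1r.
    apply/eqP => /rowP/(_ (Ordinal hN)); rewrite !mxE => /eqP.
    by rewrite oner_eq0.
  by rewrite hcp root_prod_XsubC.
rewrite (permP hperm) count_map.
set p := preim (d 0) (pred1 1).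
have ge1 : (0 < count p (index_enum 'I_N))%N.
  rewrite -has_count; move: one_in; rewrite (perm_mem hperm) => /mapP [i _ hi].
  by apply/hasP; exists i; [exact: mem_index_enum | rewrite /= -hi].
suff le1 : (count p (index_enum 'I_N) <= 1)%N.
  by apply/eqP; rewrite eqn_leq le1 ge1.
rewrite -size_filter.
have ul : uniq (filter p (index_enum 'I_N)).
  by rewrite filter_uniq // index_enum_uniq.
have mf x : x \in filter p (index_enum 'I_N) -> d 0 x = 1.
  by rewrite mem_filter => /andP [/eqP ->].
move: ul mf; case: filter => [|i [|k l]] //= ul mf.
have hik : i != k.
  by move: ul => /andP [ni _]; apply: contra ni => /eqP ->; rewrite mem_head.
have di := mf i (mem_head _ _).
have dk : d 0 k = 1 by apply: mf; rewrite inE mem_head orbT.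
pose j0 := Ordinal hN.
have cst i' : d 0 i' = 1 -> forall j, P i' j = P i' j0.
  move=> di' j; have := @fix_const_all (row i' P) _ j j0.
  by rewrite !mxE; apply; rewrite eig di' scale1r.
have hrn := rownorm i; have hrd := rowdot i k hik.
rewrite (eq_bigr (fun _ => P i j0 * (P i j0)^*)) in hrn; last first.
  by move=> j _; rewrite (cst i di).
rewrite (eq_bigr (fun _ => P i j0 * (P k j0)^*)) in hrd; last first.
  by move=> j _; rewrite (cst i di) (cst k dk).
have hrk := rownorm k.
rewrite (eq_bigr (fun _ => P k j0 * (P k j0)^*)) in hrk; last first.
  by move=> j _; rewrite (cst k dk).
have sc (x : C) : \sum_(j < N) x = x *+ N by rewrite sumr_const card_ord.
rewrite !sc in hrn hrd hrk.
move/eqP: hrd; rewrite mulrn_eq0 (negbTE (lt0n_neq0 hN)) /= mulf_eq0 conjC_eq0 => /orP [] /eqP h0.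
  by move: hrn; rewrite h0 mul0r mul0rn => /eqP; rewrite eq_sym oner_eq0.
by move: hrk; rewrite h0 mul0r mul0rn => /eqP; rewrite eq_sym oner_eq0.
Qed.

End Spec.

Theorem lemma3p6 (C : numClosedFieldType) (N : nat) (Q : 'M[C]_N) (s : seq C)
    (eps : C) :
  (8 < N)%N ->
  stochastic Q -> irreducible Q -> Q^T = Q -> \tr Q = 0 ->
  char_poly Q = \prod_(q <- s) ('X - q%:P) ->
  0 <= eps -> eps < N%:R ->
  let r := 1 - eps / N%:R in
  (forall zeta : C, `|zeta| = r ->
     minval N s eps <= `|Ffun N s zeta| <= maxval N s eps) /\
  `|Ffun N s r| = minval N s eps /\
  `|Ffun N s (- r)| = maxval N s eps.
Proof.
move=> hN hst hirr hsym htr hcp he0 he1 r.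
have hN0 : (0 < N)%N by apply: leq_trans hN.
have [hs hc] := @spec_facts C N Q hst hirr hsym s hN0 hcp.
exact: (@analytic C N hN s eps hs he0 he1 hc).
Qed.
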